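(* Let $n\ge 2$, let $\sigma,\delta,\tau\in\mathbb{C}$ with $\sigma\tau\ne0$, and suppose the tridiagonal Toeplitz matrix $T=(n;\sigma,\delta,\tau)$ is normal. For $h=1,\dots,n$ let $\widetilde{x}_h$ be a unit right eigenvector of $T$ associated with $\lambda_h=\delta+2\sqrt{\sigma\tau}\cos\frac{h\pi}{n+1}$. Then \[ \kappa(\widetilde{x}_h)= \begin{cases} \left(4|\sigma|\sin\frac{\pi}{2(n+1)}\sin\frac{(2h-1)\pi}{2(n+1)}\right)^{-1}, & 1<h\le\frac n2 \text{ or } h=n,\\[1mm] \left(4|\sigma|\sin\frac{\pi}{2(n+1)}\sin\frac{(2h+1)\pi}{2(n+1)}\right)^{-1}, & h=1 \text{ or } \frac n2<h<n. \end{cases} \] In particular $\kappa(\widetilde{x}_h)$ depends only on $h$, $n$ and $|\sigma|$. Moreover \[ \max_{h=1,\dots,n}\kappa(\widetilde{x}_h)=\left(4|\sigma|\sin\frac{\pi}{2(n+1)}\sin\frac{3\pi}{2(n+1)}\right)^{-1}, \] and this maximum is attained by the eigenvectors associated with the indices $h=1,2,n-1,n$.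
   Context: $T=(n;\sigma,\delta,\tau)$ is the $n\times n$ tridiagonal Toeplitz matrix with diagonal $\delta$, superdiagonal $\tau$, subdiagonal $\sigma$; for $\sigma\tau\ne0$ its eigenvalues $\lambda_h=\delta+2\sqrt{\sigma\tau}\cos\frac{h\pi}{n+1}$ are simple. Eigenvector condition number: for $A\in\mathbb{C}^{n\times n}$ and a unit eigenvector $x$ associated with a simple eigenvalue $\mu$, let $U\in\mathbb{C}^{n\times(n-1)}$ have orthonormal columns spanning $\mathrm{Range}(A-\mu I)$; then $\kappa(x)=\|(\mu I-U^HAU)^{-1}\|_2$ (the condition number of the one-dimensional invariant subspace spanned by $x$). *)

(* Defs.v *)
From HB Require Import structures.
From mathcomp Require Import all_boot all_order all_algebra.
From mathcomp Require Import all_classical all_reals.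
From mathcomp Require Import trigo.
From mathcomp Require Import complex.
Set Implicit Arguments. Unset Strict Implicit. Unset Printing Implicit Defensive.
Import Order.TTheory GRing.Theory Num.Theory.
Local Open Scope ring_scope.
Local Open Scope complex_scope.

Section Defs.
Variable R : realType.

Definition cabs (z : R[i]) : R := ComplexField.Normc.normc z.

Definition ctr (m n : nat) (A : 'M[R[i]]_(m, n)) : 'M[R[i]]_(n, m) :=
  (map_mx (@conjc R) A)^T.

Definition vnorm2 (n : nat) (v : 'cV[R[i]]_n) : R :=
  Num.sqrt (\sum_(i < n) cabs (v i 0) ^+ 2).

Definition specnorm (m n : nat) (M : 'M[R[i]]_(m, n)) : R :=
  sup [set vnorm2 (M *m x) | x in [set x : 'cV[R[i]]_n | vnorm2 x = 1]]%classic.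

Definition normal_mx (n : nat) (A : 'M[R[i]]_n) : Prop :=
  A *m ctr A = ctr A *m A.

Definition orthonormal_cols (m n : nat) (U : 'M[R[i]]_(m, n)) : Prop :=
  ctr U *m U = 1%:M.

(* the column space of U equals the range of B *)
Definition same_range (m n p : nat) (U : 'M[R[i]]_(m, n)) (B : 'M[R[i]]_(m, p)) : bool :=
  (U^T == B^T)%MS.

(* Condition number of the one-dimensional invariant subspace spanned by a unit
   eigenvector associated with the simple eigenvalue mu of A, computed with a matrix U
   whose orthonormal columns span Range(A - mu I):  ||(mu I - U^H A U)^{-1}||_2. *)
Definition kappa (n : nat) (A : 'M[R[i]]_n) (mu : R[i]) (U : 'M[R[i]]_(n, n.-1)) : R :=
  specnorm (invmx (mu%:M - ctr U *m A *m U)).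

Definition kbound (n : nat) (sigma : R[i]) (k : nat) : R :=
  (4%:R * cabs sigma * sin (pi / (2 * n.+1)%:R) * sin (k%:R * pi / (2 * n.+1)%:R))^-1.

Definition tridiag_toeplitz (n : nat) (sigma delta tau : R[i]) : 'M[R[i]]_n :=
  \matrix_(i, j) (if i == j :> nat then delta
                  else if j == i.+1 :> nat then tau
                  else if i == j.+1 :> nat then sigma else 0).

Definition ttoep_eig (n : nat) (delta s : R[i]) (h : nat) : R[i] :=
  delta + 2%:R * s * (cos (h%:R * pi / (n.+1)%:R))%:C.

End Defs.

(* Main.v *)
Require Import Defs.
From HB Require Import structures.
From mathcomp Require Import all_boot all_order all_algebra.
From mathcomp Require Import all_classical all_reals.
From mathcomp Require Import trigo.
From mathcomp Require Import complex.
From mathcomp Require Import ring lra zify.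
Set Implicit Arguments. Unset Strict Implicit. Unset Printing Implicit Defensive.
Import Order.TTheory GRing.Theory Num.Theory.
Local Open Scope ring_scope.
Local Open Scope complex_scope.
Section LA.
Variable R : realType.
Local Notation C := (R[i]).

Lemma cabsC (z : C) : (cabs z)%:C = `|z|.
Proof. by []. Qed.

Lemma cabs_ge0 (z : C) : 0 <= cabs z.
Proof. by case: z => a b; rewrite /cabs /=; apply: sqrtr_ge0. Qed.

Lemma cabsM (z w : C) : cabs (z * w) = cabs z * cabs w.
Proof. exact: ComplexField.Normc.normcM. Qed.

Lemma cabs2 (z : C) : (cabs z ^+ 2)%:C = z * conjc z.
Proof. by rewrite -sqr_normc rmorphXn. Qed.

Lemma ctrK m n (A : 'M[C]_(m, n)) : ctr (ctr A) = A.
Proof. by apply/matrixP => i j; rewrite !mxE conjcK. Qed.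

Lemma ctrM m n p (A : 'M[C]_(m, n)) (B : 'M[C]_(n, p)) :
  ctr (A *m B) = ctr B *m ctr A.
Proof. by rewrite /ctr map_mxM trmx_mul. Qed.

Lemma ctrD m n (A B : 'M[C]_(m, n)) : ctr (A + B) = ctr A + ctr B.
Proof. by rewrite /ctr map_mxD linearD. Qed.

Lemma ctrB m n (A B : 'M[C]_(m, n)) : ctr (A - B) = ctr A - ctr B.
Proof. by rewrite /ctr map_mxB linearB. Qed.

Lemma ctrZ m n a (A : 'M[C]_(m, n)) : ctr (a *: A) = conjc a *: ctr A.
Proof. by rewrite /ctr map_mxZ linearZ. Qed.

Lemma ctr_scalar n a : ctr (a%:M : 'M[C]_n) = (conjc a)%:M.
Proof. by apply/matrixP => i j; rewrite !mxE eq_sym; case: eqP; rewrite ?conjc0. Qed.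

Definition ns n (v : 'cV[C]_n) : R := \sum_(i < n) cabs (v i 0) ^+ 2.

Lemma ns_ge0 n (v : 'cV[C]_n) : 0 <= ns v.
Proof. by apply: sumr_ge0 => i _; rewrite sqr_ge0. Qed.

Lemma nsC n (v : 'cV[C]_n) : (ns v)%:C = (ctr v *m v) 0 0.
Proof.
rewrite /ns rmorph_sum !mxE; apply: eq_bigr => i _.
by rewrite !mxE mulrC -cabs2.
Qed.

Lemma ns_eq0 n (v : 'cV[C]_n) : ns v = 0 -> v = 0.
Proof.
move=> /eqP; rewrite psumr_eq0 => [/allP H|i _]; last by rewrite sqr_ge0.
apply/matrixP => i j; rewrite (ord1 j) mxE.
have /H : i \in index_enum 'I_n by rewrite mem_index_enum.
rewrite /= sqrf_eq0 => /eqP /ComplexField.Normc.eq0_normc //.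
Qed.

Lemma vnorm2E n (v : 'cV[C]_n) : vnorm2 v = Num.sqrt (ns v).
Proof. by []. Qed.

Lemma ns_iso m p (U : 'M[C]_(m, p)) (z : 'cV[C]_p) :
  ctr U *m U = 1%:M -> ns (U *m z) = ns z.
Proof.
move=> HU; apply: complexI; rewrite !nsC ctrM -mulmxA (mulmxA (ctr U)) HU mul1mx //.
Qed.

Lemma nsZ n a (v : 'cV[C]_n) : ns (a *: v) = cabs a ^+ 2 * ns v.
Proof.
rewrite /ns mulr_sumr; apply: eq_bigr => i _.
by rewrite mxE cabsM exprMn.
Qed.

Lemma normal_eig n (A : 'M[C]_n) (v : 'cV[C]_n) lam :
  normal_mx A -> A *m v = lam *: v -> ctr A *m v = conjc lam *: v.
Proof.
move=> HN Hv; set M := A - lam%:M.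
have HM : M *m ctr M = ctr M *m M.
  rewrite /M ctrB ctr_scalar !mulmxBl !mulmxBr HN !mul_mx_scalar !mul_scalar_mx.
  rewrite !scale_scalar_mx (mulrC lam) !opprB !addrA.
  by rewrite -!addrA; congr (_ + _); rewrite addrCA [RHS]addrCA; congr (_ + _); exact: addrC.
have Mv : M *m v = 0 by rewrite /M mulmxBl Hv mul_scalar_mx subrr.
have : ns (ctr M *m v) = 0.
  apply: complexI; rewrite nsC ctrM ctrK mulmxA -(mulmxA (ctr v)) HM mulmxA.
  by rewrite -mulmxA Mv mulmx0 mxE.
move/ns_eq0; rewrite /M ctrB ctr_scalar mulmxBl mul_scalar_mx.
by move/eqP; rewrite subr_eq0 => /eqP.
Qed.

End LA.
Section Core.
Variable R : realType.
Local Notation C := (R[i]).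

Lemma ns1 n (v : 'cV[C]_n) : vnorm2 v = 1 -> ns v = 1.
Proof. by rewrite vnorm2E => H; rewrite -(sqr_sqrtr (ns_ge0 v)) H expr1n. Qed.

Lemma cabs_real (r : R) : 0 <= r -> cabs r%:C = r.
Proof. by move=> r0; apply: complexI; rewrite cabsC ger0_norm // ler0c. Qed.

Lemma cabs0 : cabs (0 : C) = 0.
Proof. exact: ComplexField.Normc.normc0. Qed.

Lemma ns_delta n (j : 'I_n) : ns (delta_mx j 0 : 'cV[C]_n) = 1.
Proof.
rewrite /ns (bigD1 j) //= big1 ?addr0 => [|i /negPf Hi]; rewrite mxE.
  by rewrite !eqxx /= expr1n expr0n addr0 sqrtr1 expr1n.
by rewrite Hi andFb mulr0n cabs0 expr0n.
Qed.

Lemma core (n : nat) (T Q : 'M[C]_n) (lam : 'I_n -> C) (i0 : 'I_n)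
  (U : 'M[C]_(n, n.-1)) (d : R) :
  ctr Q *m Q = 1%:M -> T *m Q = Q *m diag_mx (\row_j lam j) -> 0 < d ->
  (forall j, j != i0 -> d <= cabs (lam i0 - lam j)) ->
  (exists2 j, j != i0 & cabs (lam i0 - lam j) = d) ->
  orthonormal_cols U -> same_range U (T - (lam i0)%:M) ->
  kappa T (lam i0) U = d^-1.
Proof.
move=> HQ HT d0 Hmin [js Hjs Hd] HU Hsr.
have di0 : 0 < d^-1 by rewrite invr_gt0.
have HU' : ctr U *m U = 1%:M by [].
rewrite /kappa; set mu := lam i0.
set B := mu%:M - ctr U *m T *m U.
have [X HX] : exists X, T - mu%:M = U *m X.
  case/andP: Hsr => _ /submxP [D HD]; exists D^T.
  by rewrite -(trmxK (T - mu%:M)) HD trmx_mul trmxK.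
have [Y HY] : exists Y, U = (T - mu%:M) *m Y.
  case/andP: Hsr => /submxP [D HD] _; exists D^T.
  by rewrite -(trmxK U) HD trmx_mul trmxK.
have QQ : Q *m ctr Q = 1%:M by apply: mulmx1C.
set D := diag_mx (\row_j lam j).
have QT : ctr Q *m T = D *m ctr Q.
  rewrite -[ctr Q *m T]mulmx1 -QQ mulmxA -(mulmxA (ctr Q) T Q) HT.
  by rewrite mulmxA HQ mul1mx.
have nsQ w : ns (ctr Q *m w) = ns w.
  by apply: ns_iso; rewrite ctrK.
have TU : T *m U = U *m (X *m U + mu%:M).
  rewrite mulmxDr mul_mx_scalar mulmxA -HX mulmxBl mul_scalar_mx.
  by rewrite subrK.
have UB : U *m B = (mu%:M - T) *m U.
  rewrite /B mulmxBr mul_mx_scalar mulmxBl mul_scalar_mx; congr (_ - _).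
  by rewrite -mulmxA TU mulmxA HU' mul1mx.
have Centry w j : ((ctr Q *m (mu%:M - T)) *m w) j 0 = (mu - lam j) * (ctr Q *m w) j 0.
  rewrite mulmxBr mul_mx_scalar QT mulmxBl -scalemxAl -mulmxA /D mul_diag_mx.
  by rewrite !mxE mulrBl.
have Cw z : (ctr Q *m (U *m z)) i0 0 = 0.
  rewrite HY -mulmxA mulmxA mulmxBr QT mul_mx_scalar mulmxBl -scalemxAl /D.
  by rewrite -mulmxA mul_diag_mx !mxE subrr.
have key w : (ctr Q *m w) i0 0 = 0 -> d ^+ 2 * ns w <= ns ((mu%:M - T) *m w).
  move=> Hw; rewrite -nsQ -(nsQ ((mu%:M - T) *m w)) mulmxA /ns mulr_sumr.
  apply: ler_sum => j _; rewrite Centry cabsM exprMn.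
  have [->|Hj] := eqVneq j i0.
    by rewrite Hw cabs0 expr0n !mulr0.
  apply: ler_wpM2r; first exact: sqr_ge0.
  by rewrite lerXn2r ?nnegrE ?cabs_ge0 ?(ltW d0) ?Hmin.
have Bz z : d ^+ 2 * ns z <= ns (B *m z).
  rewrite -(ns_iso z HU) -(ns_iso (B *m z) HU) mulmxA UB -mulmxA.
  by apply: key; apply: Cw.
have Bunit : B \in unitmx.
  rewrite unitmxE unitfE -det_tr; apply/negP => /det0P [v Hv HvB].
  have : B *m v^T = 0 by rewrite -(trmxK B) -trmx_mul HvB trmx0.
  move=> HB; have := Bz v^T; rewrite HB.
  have -> : ns (0 : 'cV[C]_(n.-1)) = 0.
    by rewrite /ns big1 // => i _; rewrite mxE cabs0 expr0n.
  rewrite pmulr_rle0 ?exprn_gt0 // => Hle.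
  have /ns_eq0 Hv0 : ns v^T = 0 by apply/le_anti; rewrite Hle ns_ge0.
  by move: Hv; rewrite -(trmxK v) Hv0 trmx0 eqxx.
have ub x : vnorm2 x = 1 -> vnorm2 (invmx B *m x) <= d^-1.
  move=> /ns1 Hx; rewrite vnorm2E.
  have := Bz (invmx B *m x); rewrite mulKVmx // Hx => H.
  rewrite -(ger0_norm (ltW di0)) -sqrtr_sqr ler_sqrt ?sqr_ge0 //.
  rewrite exprVn -(ler_pM2l (exprn_gt0 2 d0)) mulfV //.
  by rewrite expf_neq0 // gt_eqF.
set e := (delta_mx js 0 : 'cV[C]_n).
set w := Q *m e.
have De : D *m e = lam js *: e.
  apply/matrixP => i k; rewrite mul_diag_mx !mxE (ord1 k).
  by have [->|Hi] := eqVneq i js; rewrite ?mulr1 ?mulr0 //= eqxx.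
have Tw : T *m w = lam js *: w by rewrite mulmxA HT -mulmxA De scalemxAr.
have mjs : lam js - mu != 0.
  apply/eqP => H0; move: Hd; rewrite -opprB H0 oppr0 cabs0 => H.
  by move: d0; rewrite -H ltxx.
have Mw : w = (T - mu%:M) *m ((lam js - mu)^-1 *: w).
  rewrite -scalemxAr mulmxBl Tw mul_scalar_mx -scalerBl scalerA mulVf //.
  by rewrite scale1r.
set z0 := X *m ((lam js - mu)^-1 *: w).
have Uz0 : U *m z0 = w by rewrite mulmxA -HX -Mw.
have nz0 : ns z0 = 1 by rewrite -(ns_iso z0 HU) Uz0 /w (ns_iso _ HQ) ns_delta.
set y0 := B *m z0.
have ny0 : ns y0 = d ^+ 2.
  rewrite -(ns_iso y0 HU) /y0 mulmxA UB -mulmxA Uz0 mulmxBl Tw mul_scalar_mx.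
  rewrite -scalerBl nsZ /w (ns_iso _ HQ) ns_delta mulr1 Hd //.
set x0 := (d^-1)%:C *: y0.
have cd : cabs (d^-1)%:C = d^-1 by rewrite cabs_real // ltW.
have nx0 : vnorm2 x0 = 1.
  rewrite vnorm2E /x0 nsZ ny0 cd exprVn mulVf ?sqrtr1 //.
  by rewrite expf_neq0 // gt_eqF.
have ix0 : vnorm2 (invmx B *m x0) = d^-1.
  rewrite /x0 -scalemxAr /y0 mulKmx // vnorm2E nsZ nz0 cd mulr1 sqrtr_sqr.
  by rewrite ger0_norm // ltW.
apply/le_anti/andP; split.
  apply: ge_sup; first by exists (vnorm2 (invmx B *m x0)), x0.
  by move=> r [x Hx <-]; apply: ub.
rewrite -ix0; apply: ub_le_sup; last by exists x0.
by exists d^-1 => r [x Hx <-]; apply: ub.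
Qed.

End Core.
Section Eig.
Variable R : realType.
Local Notation C := (R[i]).

Lemma tt_row n (sigma delta tau : C) (g : nat -> C) (i : 'I_n) :
  g 0%N = 0 -> g n.+1 = 0 ->
  (tridiag_toeplitz n sigma delta tau *m \matrix_(k < n, l < 1) g k.+1) i 0
  = sigma * g i + delta * g i.+1 + tau * g i.+2.
Proof.
move=> g0 gn; rewrite mxE.
have E l : tridiag_toeplitz n sigma delta tau i l * (\matrix_(k < n, l < 1) g k.+1) l 0
  = (if l == i :> nat then delta * g i.+1 else 0)
  + (if l == i.+1 :> nat then tau * g i.+2 else 0)
  + (if l.+1 == i :> nat then sigma * g i else 0).
  rewrite !mxE /=; move: (nat_of_ord l) (nat_of_ord i) => a b.
  have [->|Hl] := eqVneq a b.
    rewrite ?eqxx.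
    have -> : (b == b.+1) = false by rewrite ltn_eqF.
    have -> : (b.+1 == b) = false by rewrite gtn_eqF.
    by rewrite !addr0.
  rewrite ?eqxx ?(negPf Hl) ?add0r.
  have [->|Hl2] := eqVneq a b.+1.
    rewrite ?eqxx.
    have -> : (b.+2 == b) = false by rewrite gtn_eqF.
    by rewrite addr0.
  rewrite ?(negPf Hl2) ?add0r.
  have [->|Hl3] := eqVneq b a.+1.
    by rewrite ?eqxx ?add0r.
  by rewrite ?(negPf Hl3) ?mul0r ?add0r ?addr0.
rewrite (eq_bigr _ (fun l _ => E l)) !big_split /= -!big_mkcond /=.
rewrite (big_ord1_eq _ (fun _ => delta * g i.+1)) (big_ord1_eq _ (fun _ => tau * g i.+2)) ltn_ord.
clear E.
have -> : \sum_(l < n | l.+1 == i :> nat) sigma * g i = sigma * g i.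
  case: i => [[|i'] Hi] /=.
    by rewrite big_pred0 ?g0 ?mulr0 // => l.
  rewrite (eq_bigl (fun l : 'I_n => (l : nat) == i')) //.
  by rewrite (big_ord1_eq _ (fun _ => sigma * g i'.+1)) (ltn_trans _ Hi).
case: ltnP => Hi.
  by rewrite addrC addrA.
have -> : i.+2 = n.+1 by apply/eqP; rewrite eqSS eqn_leq Hi ltn_ord.
by rewrite gn mulr0 addrC addrA.
Qed.

End Eig.
Section Eig2.
Variable R : realType.
Local Notation C := (R[i]).

Definition theta (n : nat) : R := pi / (n.+1)%:R.
Definition ef (s tau : C) (n j k : nat) : C :=
  (s / tau) ^+ k * (sin (k%:R * (j%:R * theta n)))%:C.
Definition evec (s tau : C) (n j : nat) : 'cV[C]_n :=
  \matrix_(k < n, l < 1) ef s tau n j k.+1.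

Lemma sin_natpi (j : nat) : sin (j%:R * pi) = 0 :> R.
Proof.
elim: j => [|j IH]; first by rewrite mul0r sin0.
by rewrite -addn1 natrD mulrDl mul1r sinDpi IH oppr0.
Qed.

Lemma ef0 s tau n j : ef s tau n j 0 = 0.
Proof. by rewrite /ef mul0r sin0 mulr0. Qed.

Lemma efn s tau n j : ef s tau n j n.+1 = 0.
Proof.
rewrite /ef /theta.
have -> : (n.+1)%:R * (j%:R * (pi / (n.+1)%:R)) = j%:R * pi :> R.
  by field; rewrite paddr_eq0 ?ler0n ?ler01 // oner_eq0.
by rewrite sin_natpi mulr0.
Qed.

Lemma sin_rec (x : R) (i : nat) :
  sin (i.+2%:R * x) = 2 * cos x * sin (i.+1%:R * x) - sin (i%:R * x).
Proof.
have -> : i.+2%:R * x = i.+1%:R * x + x by rewrite -addn1 natrD mulrDl mul1r.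
have -> : i%:R * x = i.+1%:R * x - x by rewrite -addn1 natrD mulrDl mul1r addrK.
rewrite sinD sinB; ring.
Qed.

Lemma evec_eig n (sigma delta tau s : C) j :
  tau != 0 -> s ^+ 2 = sigma * tau ->
  tridiag_toeplitz n sigma delta tau *m evec s tau n j
  = ttoep_eig n delta s j *: evec s tau n j.
Proof.
move=> t0 Hs; apply/matrixP => i k; rewrite (ord1 k) tt_row ?ef0 ?efn //.
rewrite !mxE /ef /ttoep_eig.
have -> : j%:R * pi / (n.+1)%:R = j%:R * theta n by rewrite /theta mulrA.
set x := j%:R * theta n.
rewrite sin_rec rmorphB !rmorphM /=.
have -> : sigma = s ^+ 2 / tau by rewrite Hs mulfK.
set p := s / tau.
rewrite !exprS.
set q := p ^+ i.
rewrite /p.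
have -> : (2 : R)%:C = 2 by rewrite rmorph_nat.
field.
by [].
Qed.

End Eig2.
Section Q.
Variable R : realType.
Local Notation C := (R[i]).

Lemma thetaE n a : a%:R * theta R n = a%:R * pi / (n.+1)%:R :> R.
Proof. by rewrite /theta mulrA. Qed.

Lemma theta_le n a : (a <= n.+1)%N -> 0 <= a%:R * theta R n <= pi.
Proof.
move=> Ha; rewrite thetaE; apply/andP; split.
  by rewrite divr_ge0 // mulr_ge0 // pi_ge0.
by rewrite ler_pdivrMr ?ltr0n // mulrC ler_pM2l ?pi_gt0 // ler_nat.
Qed.

Lemma theta_lt n a : (0 < a)%N -> (a < n.+1)%N -> 0 < a%:R * theta R n < pi.
Proof.
move=> H0 Ha; rewrite thetaE; apply/andP; split.
  by rewrite divr_gt0 ?ltr0n // mulr_gt0 ?ltr0n // pi_gt0.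
by rewrite ltr_pdivrMr ?ltr0n // mulrC ltr_pM2l ?pi_gt0 // ltr_nat.
Qed.

Lemma cos_theta_inj n a b : (a <= n.+1)%N -> (b <= n.+1)%N ->
  cos (a%:R * theta R n) = cos (b%:R * theta R n) -> a = b :> nat.
Proof.
move=> Ha Hb /cos_inj H.
have /H : a%:R * theta R n \in `[0, pi] by rewrite in_itv /= theta_le.
move=> /(_ _) H2.
have : a%:R * theta R n = b%:R * theta R n by apply: H2; rewrite in_itv /= theta_le.
move/(mulIf _) => /= H3.
have : a%:R = b%:R :> R.
  apply: H3. by rewrite /theta mulf_neq0 // ?invr_eq0 ?pnatr_eq0 // gt_eqF // pi_gt0.
by move/eqP; rewrite eqr_nat => /eqP.
Qed.

End Q.
Section Q2.
Variable R : realType.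
Local Notation C := (R[i]).

Lemma orth_eig n (A : 'M[C]_n) (u w : 'cV[C]_n) a b :
  normal_mx A -> A *m u = a *: u -> A *m w = b *: w -> a != b -> ctr u *m w = 0.
Proof.
move=> HN Hu Hw ab.
have H1 : ctr u *m (A *m w) = b *: (ctr u *m w) by rewrite Hw scalemxAr.
have H2 : ctr u *m (A *m w) = a *: (ctr u *m w).
  rewrite mulmxA -[ctr u *m A](ctrK) ctrM ctrK (normal_eig HN Hu) ctrZ conjcK.
  by rewrite scalemxAl.
have : (b - a) *: (ctr u *m w) = 0 by rewrite scalerBl -H1 -H2 subrr.
move/eqP; rewrite scaler_eq0 subr_eq0 eq_sym (negPf ab) /=.
by move/eqP.
Qed.

Lemma Q_build n (A : 'M[C]_n) (u : 'I_n -> 'cV[C]_n) (lam : 'I_n -> C) :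
  (forall k, ns (u k) = 1) -> (forall k l, k != l -> ctr (u k) *m u l = 0) ->
  (forall k, A *m u k = lam k *: u k) ->
  exists Q : 'M[C]_n, ctr Q *m Q = 1%:M /\ A *m Q = Q *m diag_mx (\row_k lam k).
Proof.
move=> Hn Ho He; exists (\matrix_(i, k) u k i 0); split.
  apply/matrixP => k l.
  have -> : (ctr (\matrix_(i, k) u k i 0) *m \matrix_(i, k) u k i 0) k l
     = (ctr (u k) *m u l) 0 0.
    by rewrite !mxE; apply: eq_bigr => i _; rewrite !mxE.
  rewrite [RHS]mxE; have [->|kl] := eqVneq k l.
    by rewrite -nsC Hn.
  by rewrite Ho // mxE ?(negPf kl).
apply/matrixP => i l; rewrite mul_mx_diag !mxE.
have -> : \sum_j A i j * (\matrix_(i, k) u k i 0) j l = (A *m u l) i 0.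
  by rewrite !mxE; apply: eq_bigr => j _; rewrite !mxE.
by rewrite He !mxE mulrC.
Qed.

Lemma Q_exists n (sigma delta tau s : C) :
  sigma * tau != 0 -> s ^+ 2 = sigma * tau ->
  normal_mx (tridiag_toeplitz n sigma delta tau) ->
  exists Q : 'M[C]_n, ctr Q *m Q = 1%:M /\
    tridiag_toeplitz n sigma delta tau *m Q
    = Q *m diag_mx (\row_(k < n) ttoep_eig n delta s k.+1).
Proof.
move=> st Hs HN.
have t0 : tau != 0 by move: st; rewrite mulf_eq0 negb_or => /andP [].
have sg0 : sigma != 0 by move: st; rewrite mulf_eq0 negb_or => /andP [].
have s0 : s != 0 by apply: contraNneq st => s0; rewrite -Hs s0 expr0n.
set T := tridiag_toeplitz n sigma delta tau.
pose v (k : 'I_n) := evec s tau n k.+1.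
have vnz (k : 'I_n) : ns (v k) != 0.
  apply/eqP => /ns_eq0 /matrixP /(_ (Ordinal (leq_ltn_trans (leq0n _) (ltn_ord k))) 0).
  rewrite !mxE /ef expr1 mul1r => /eqP.
  apply/negP; rewrite !mulf_eq0 !negb_or s0 invr_eq0 t0 /=.
  rewrite -[0]/((0 : R)%:C) (inj_eq (@complexI R)) gt_eqF //.
  by apply: sin_gt0_pi; apply: theta_lt; rewrite ?ltnS ?ltn_ord.
pose u (k : 'I_n) := ((Num.sqrt (ns (v k)))^-1)%:C *: v k.
have ue (k : 'I_n) : T *m u k = ttoep_eig n delta s k.+1 *: u k.
  by rewrite /u -scalemxAr /v evec_eig // !scalerA mulrC.
apply: (Q_build (u := u)) => //.
  move=> k; rewrite /u nsZ cabs_real; last by rewrite invr_ge0 sqrtr_ge0.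
  by rewrite exprVn sqr_sqrtr ?ns_ge0 // mulVf.
move=> k l kl; apply: (orth_eig HN (ue k) (ue l)).
apply/eqP => /addrI /mulfI H.
have /H : 2%:R * s != 0 by rewrite mulf_neq0 // pnatr_eq0.
move/complexI; rewrite -!thetaE => /cos_theta_inj H4.
have /eqP := H4 (leqW (ltn_ord k)) (leqW (ltn_ord l)).
by rewrite eqSS => kl'; move: kl; rewrite -(inj_eq val_inj) kl'.
Qed.

End Q2.
Section Trig.
Variable R : realType.

Lemma cos_le (x y : R) : 0 <= x -> y <= pi -> x <= y -> cos y <= cos x.
Proof.
move=> x0 ypi; rewrite le_eqVlt => /orP [/eqP ->//|xy].
apply: ltW; rewrite ltr_cos ?in_itv /= ?x0 ?ypi //.
- by rewrite (le_trans (ltW xy)).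
- by rewrite (le_trans x0 (ltW xy)).
Qed.

Lemma sin_le (x y : R) : - (pi / 2) <= x -> y <= pi / 2 -> x <= y -> sin x <= sin y.
Proof.
move=> x0 ypi; rewrite le_eqVlt => /orP [/eqP ->//|xy].
apply: ltW; rewrite ltr_sin ?in_itv /= ?x0 ?ypi //.
- by rewrite (le_trans (ltW xy)).
- by rewrite (le_trans x0 (ltW xy)).
Qed.

End Trig.
Section Trig2.
Variable R : realType.

Lemma onenS_neq0 (n : nat) : 1 + n%:R != 0 :> R.
Proof. by rewrite paddr_eq0 ?ler0n ?ler01 // oner_eq0. Qed.

Lemma trig_main (n h : nat) : (2 <= n)%N -> (1 <= h <= n)%N ->
  let c (m : nat) := cos (m%:R * pi / (n.+1)%:R) : R in
  let K := if ((1 < h)%N && (2 * h <= n)%N) || (h == n) then (2 * h - 1)%N else (2 * h + 1)%N in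
  let e := 2 * sin (pi / (2 * n.+1)%:R) * sin (K%:R * pi / (2 * n.+1)%:R) in
  0 < e /\ (forall m, (1 <= m <= n)%N -> m != h -> e <= `|c h - c m|) /\
  (exists m, [/\ (1 <= m <= n)%N, m != h & `|c h - c m| = e]).
Proof.
move=> n2 /andP [h1 hn] c K e.
pose th : R := pi / (n.+1)%:R.
pose a : R := pi / (2 * n.+1)%:R.
have cE m : c m = cos (m%:R * th) by rewrite /c /th mulrA.
have EN : (2 * n.+1)%N = (2 * n).+1.+1 by rewrite mulnSr addn2.
have aE k : k%:R * pi / (2 * n.+1)%:R = k%:R * theta R (2 * n).+1.
  by rewrite /theta mulrA EN.
have thE m : m%:R * th = (2 * m)%:R * a.
  rewrite /th /a natrM (natrM _ 2 n.+1); field.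
  by rewrite onenS_neq0.
have sinpos k : (0 < k)%N -> (k < (2 * n).+2)%N -> 0 < sin (k%:R * a).
  move=> k0 kn; rewrite /a mulrA aE; apply: sin_gt0_pi; exact: theta_lt.
have Gm m : c m - c m.+1 = 2 * sin a * sin ((2 * m + 1)%:R * a).
  rewrite !cE !thE.
  have -> : (2 * m)%:R * a = (2 * m + 1)%:R * a - a.
    by rewrite natrD mulrDl mul1r addrK.
  have -> : (2 * m.+1)%:R * a = (2 * m + 1)%:R * a + a.
    by rewrite (_ : (2 * m.+1 = (2 * m + 1) + 1)%N) ?natrD ?mulrDl ?mul1r //; lia.
  rewrite cosB cosD; ring.
have cdec m m' : (m <= m')%N -> (m' <= n.+1)%N -> c m' <= c m.
  move=> mm' m'n; rewrite !cE; apply: cos_le.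
  - by case/andP: (theta_le R (leq_trans mm' m'n)); rewrite /theta -/th.
  - by case/andP: (theta_le R m'n); rewrite /theta -/th.
  by rewrite ler_wpM2r ?ler_nat // /th divr_ge0 ?pi_ge0.
have ch_ge0 : (2 * h <= n)%N -> 0 <= c h.
  move=> H; rewrite cE; apply: cos_ge0_pihalf; apply/andP; split.
    apply: (le_trans _ (mulr_ge0 (ler0n _ _) _)); last by rewrite divr_ge0 ?pi_ge0.
    by rewrite oppr_le0 divr_ge0 ?pi_ge0.
  rewrite /th mulrA ler_pdivrMr ?ltr0n // -(@natr1 R n).
  have Hr : (2 * h)%:R <= n%:R :> R by rewrite ler_nat.
  rewrite natrM in Hr; have := pi_gt0 R; nra.
have ch_le0 : (n < 2 * h)%N -> c h <= 0.
  move=> H; rewrite -cos_pihalf cE; apply: cos_le.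
  - by rewrite divr_ge0 ?pi_ge0.
  - by case/andP: (theta_le R (leq_trans hn (leqnSn n))); rewrite /theta -/th.
  rewrite /th mulrA ler_pdivlMr ?ltr0n // -(@natr1 R n).
  have Hr : n.+1%:R <= (2 * h)%:R :> R by rewrite ler_nat.
  rewrite natrM -(@natr1 R n) in Hr; have := pi_gt0 R; nra.
have cos_th1 : cos th <= 1 by apply: cos_le1.
have G2 h' : h = h'.+1 -> (c h' - c h) - (c h - c h.+1) = - (2 * c h * (1 - cos th)).
  move=> -> ; rewrite !cE.
  have -> : h'%:R * th = h'.+1%:R * th - th by rewrite -addn1 natrD mulrDl mul1r addrK.
  have -> : h'.+2%:R * th = h'.+1%:R * th + th by rewrite -(addn1 h'.+1) natrD mulrDl mul1r.
  rewrite cosB cosD; ring.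
have Gnn m : (m <= n)%N -> 0 <= c m - c m.+1.
  by move=> mn; rewrite subr_ge0; apply: cdec.
have eE : e = 2 * sin a * sin (K%:R * a) by rewrite /e mulrA.
have sa : 0 < sin a.
  by have := sinpos 1%N erefl; rewrite mul1r; apply.
have [h' Eh] : exists h', h = h'.+1 by exists h.-1; rewrite prednK.
have G2' := G2 h' Eh.
have lo m : (1 <= m <= n)%N -> (m < h)%N -> c h' - c h <= `|c h - c m|.
  move=> /andP [m1 mn] mh; rewrite distrC (le_trans _ (ler_norm _)) // lerD2r.
  by apply: cdec; lia.
have hi m : (1 <= m <= n)%N -> (h < m)%N -> c h - c h.+1 <= `|c h - c m|.
  move=> /andP [m1 mn] mh; rewrite (le_trans _ (ler_norm _)) // lerD2l lerN2.
  by apply: cdec; lia.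
have omc : 0 <= 1 - cos th by rewrite subr_ge0.
rewrite /K in eE; case: ifP eE => HK eE.
- have eG : e = c h' - c h.
    rewrite eE (_ : (2 * h - 1 = 2 * h' + 1)%N); last by lia.
    by rewrite -Gm Eh.
  have epos : 0 < e.
    by rewrite eE mulr_gt0 // ?mulr_gt0 // sinpos //; lia.
  split; first exact: epos.
  split.
    move=> m Hm mh; have [mlt|mgt] := ltnP m h; first by rewrite eG lo.
    have mgt' : (h < m)%N by rewrite ltn_neqAle eq_sym mh mgt.
    apply: (le_trans _ (hi m Hm mgt')); rewrite eG.
    case/orP: HK => [/andP [_ H2]|/eqP hn']; last by lia.
    have := ch_ge0 H2; have := mulr_ge0 (ch_ge0 H2) omc; lra.
  exists h'; split; [|lia|].
    by case/orP: HK => [/andP [H1 _]|/eqP hn']; lia.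
  rewrite distrC ger0_norm ?eG //.
  by have := Gnn h'; rewrite Eh; apply; lia.
- have eG : e = c h - c h.+1.
    by rewrite eE -Gm.
  have epos : 0 < e.
    by rewrite eE mulr_gt0 // ?mulr_gt0 // sinpos //; lia.
  split; first exact: epos.
  split.
    move=> m Hm mh; have [mlt|mgt] := ltnP m h.
      apply: (le_trans _ (lo m Hm mlt)); rewrite eG.
      have H2 : (n < 2 * h)%N by move: HK; case/andP: Hm => ? ?; lia.
      have Hc : 0 <= - c h by rewrite oppr_ge0 ch_le0.
      have := mulr_ge0 Hc omc; lra.
    have mgt' : (h < m)%N by rewrite ltn_neqAle eq_sym mh mgt.
    by rewrite eG hi.
  exists h.+1; split; [|lia|].
    by move: HK; lia.
  by rewrite ger0_norm ?eG // Gnn.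
Qed.


End Trig2.
Section Trig3.
Variable R : realType.

Lemma sin_refl (n k : nat) : (k <= 2 * n.+1)%N ->
  sin (k%:R * pi / (2 * n.+1)%:R) = sin ((2 * n.+1 - k)%:R * pi / (2 * n.+1)%:R) :> R.
Proof.
move=> kn.
have -> : (2 * n.+1 - k)%:R * pi / (2 * n.+1)%:R = pi - k%:R * pi / (2 * n.+1)%:R :> R.
  by rewrite natrB //; field; rewrite paddr_eq0 ?ler0n ?ler01 // oner_eq0.
by rewrite sinB sinpi cospi mul0r sub0r mulN1r opprK.
Qed.

Lemma sin_ge3_aux (n k : nat) : (3 <= k)%N -> (k <= n.+1)%N ->
  sin (3%:R * pi / (2 * n.+1)%:R) <= sin (k%:R * pi / (2 * n.+1)%:R) :> R.
Proof.
move=> k3 kn; have pi0 := pi_gt0 R.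
have N0 : 0 < (2 * n.+1)%:R :> R by rewrite ltr0n muln_gt0.
apply: sin_le.
- have H3 : 0 <= 3%:R * pi / (2 * n.+1)%:R :> R by rewrite divr_ge0 // ?mulr_ge0 // ltW.
  by apply: le_trans H3; rewrite oppr_le0 divr_ge0 // ltW.
- have Hk : 2 * k%:R <= (2 * n.+1)%:R :> R by rewrite -natrM ler_nat; lia.
  rewrite ler_pdivrMr //; move: Hk N0; set N := (2 * n.+1)%:R => Hk N0; nra.
- by rewrite ler_pM2r ?invr_gt0 // ler_pM2r // ler_nat.
Qed.

End Trig3.
Section Final.
Variable R : realType.
Local Notation C := (R[i]).

Lemma sin_ge3 (n k : nat) : (3 <= k)%N -> (k + 3 <= 2 * n.+1)%N ->
  sin (3%:R * pi / (2 * n.+1)%:R) <= sin (k%:R * pi / (2 * n.+1)%:R) :> R.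
Proof.
move=> k3 kn; have [kle|kgt] := leqP k n.+1.
  by move: (@sin_ge3_aux R n k k3 kle).
rewrite [X in _ <= X](@sin_refl R n k); last by lia.
have k3' : (2 < (2 * n.+1 - k))%N by lia.
have kn' : ((2 * n.+1 - k) <= n.+1)%N by lia.
by move: (@sin_ge3_aux R n _ k3' kn').
Qed.

Lemma cabs_realN (r : R) : cabs r%:C = `|r|.
Proof.
apply: complexI; rewrite cabsC normc_def /=.
by rewrite expr0n addr0 sqrtr_sqr.
Qed.

Lemma ttoep_diff n (delta s : C) a b :
  cabs (ttoep_eig n delta s a - ttoep_eig n delta s b)
  = 2 * cabs s * `|cos (a%:R * pi / (n.+1)%:R) - cos (b%:R * pi / (n.+1)%:R)|.
Proof.
rewrite /ttoep_eig opprD addrACA subrr add0r -mulrBr -rmorphB !cabsM cabs_realN.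
have -> : (2 : C) = (2 : R)%:C by rewrite rmorph_nat.
by rewrite cabs_realN normr_nat.
Qed.

Lemma normal_abs n (sigma delta tau : C) : (2 <= n)%N ->
  normal_mx (tridiag_toeplitz n sigma delta tau) -> cabs sigma = cabs tau.
Proof.
case: n => [|[|n]] // _; rewrite /normal_mx => HN.
have := congr1 (fun M : 'M[C]_n.+2 => M ord0 ord0) HN; rewrite /= !mxE.
rewrite !big_ord_recl big1 ?addr0; last first.
  by move=> i _; rewrite !mxE /= ?mul0r ?mulr0.
rewrite big1 ?addr0; last first.
  by move=> i _; rewrite !mxE /= ?mul0r ?mulr0.
rewrite !mxE /= => H.
move: H; rewrite (mulrC (conjc delta)) => /addrI.
rewrite (mulrC (conjc sigma)) -!cabs2 => /complexI /eqP.
by rewrite eqrXn2 ?cabs_ge0 // => /eqP.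
Qed.

End Final.
Unset Implicit Arguments. Set Strict Implicit.
Theorem proposition5 (R : realType) (n : nat) (sigma delta tau s : R[i]) :
  (2 <= n)%N -> sigma * tau != 0 -> s ^+ 2 = sigma * tau ->
  normal_mx (tridiag_toeplitz n sigma delta tau) ->
  (* explicit formula *)
  (forall (h : nat) (x : 'cV[R[i]]_n) (U : 'M[R[i]]_(n, n.-1)),
     (1 <= h <= n)%N -> vnorm2 x = 1 ->
     tridiag_toeplitz n sigma delta tau *m x = ttoep_eig n delta s h *: x ->
     orthonormal_cols U ->
     same_range U (tridiag_toeplitz n sigma delta tau - (ttoep_eig n delta s h)%:M) ->
     (((1 < h)%N /\ (2 * h <= n)%N) \/ h = n ->
        kappa (tridiag_toeplitz n sigma delta tau) (ttoep_eig n delta s h) U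
        = kbound n sigma (2 * h - 1)) /\
     (h = 1%N \/ ((n < 2 * h)%N /\ (h < n)%N) ->
        kappa (tridiag_toeplitz n sigma delta tau) (ttoep_eig n delta s h) U
        = kbound n sigma (2 * h + 1)) /\
     (* the maximum over h *)
     kappa (tridiag_toeplitz n sigma delta tau) (ttoep_eig n delta s h) U
       <= kbound n sigma 3 /\
     (h \in [:: 1; 2; n.-1; n]%N ->
        kappa (tridiag_toeplitz n sigma delta tau) (ttoep_eig n delta s h) U
        = kbound n sigma 3)).
Proof.
move=> n2 st Hs HN h x U hh Hx Hxe HU Hsr.
have [Q [HQ HTQ]] := Q_exists st Hs HN.
have sg0 : sigma != 0 by move: st; rewrite mulf_eq0 negb_or => /andP [].
have cs : cabs s = cabs sigma.
  have /eqP : cabs s ^+ 2 = cabs sigma ^+ 2.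
    by rewrite expr2 -cabsM -expr2 Hs cabsM -(normal_abs n2 HN) expr2.
  by rewrite eqrXn2 ?cabs_ge0 // => /eqP.
have csg : 0 < cabs sigma.
  rewrite lt_def cabs_ge0 andbT; apply/eqP => /ComplexField.Normc.eq0_normc H.
  by move: sg0; rewrite H eqxx.
pose lam := fun k : 'I_n => ttoep_eig n delta s k.+1.
case/andP: (hh) => h1 hn.
have hlt : (h.-1 < n)%N by rewrite prednK.
pose i0 := Ordinal hlt.
have Hi0 : ttoep_eig n delta s h = lam i0 by rewrite /lam /= prednK.
rewrite Hi0 in Hsr *.
have := trig_main R n2 hh => /= -[epos [elow [m [Hm mh Hme]]]].
set K := (if _ then _ else _) in epos elow Hme.
have Hk : kappa (tridiag_toeplitz n sigma delta tau) (lam i0) U = kbound n sigma K.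
  have dE (A B : R) : 4 * cabs sigma * A * B = 2 * cabs sigma * (2 * A * B) by ring.
  have i0h : i0.+1 = h by rewrite /= prednK.
  rewrite /kbound; apply: (core HQ HTQ) => //.
  - by rewrite dE mulr_gt0 // mulr_gt0.
  - move=> j ji0; rewrite ttoep_diff i0h cs dE ler_pM2l ?mulr_gt0 //.
    apply: elow; first by rewrite ltn_ord.
    apply/negP => /eqP jh; move/negP: ji0; apply; apply/eqP; apply: val_inj => /=.
    by rewrite -jh.
  - have ml : (m.-1 < n)%N by case/andP: Hm => m1 mn; rewrite prednK.
    exists (Ordinal ml).
      apply/negP => /eqP /(congr1 val) /= E; move/negP: mh; apply; apply/eqP.
      by rewrite -(prednK h1) -E prednK //; case/andP: Hm.
    by rewrite ttoep_diff i0h /= prednK ?cs ?Hme ?dE //; case/andP: Hm.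
rewrite Hk.
have sinp k : (0 < k)%N -> (k < 2 * n.+1)%N -> 0 < sin (k%:R * pi / (2 * n.+1)%:R) :> R.
  move=> k0 kn; have -> : (2 * n.+1)%N = (2 * n).+1.+1 by lia.
  by rewrite -thetaE; apply: sin_gt0_pi; apply: theta_lt => //; lia.
have sa : 0 < sin (pi / (2 * n.+1)%:R) :> R.
  by have := sinp 1%N erefl; rewrite mul1r; apply; lia.
have K3 : (3 <= K)%N && (K + 3 <= 2 * n.+1)%N.
  by rewrite /K; case: ifP; move: hh n2; lia.
have Kpos : 0 < sin (K%:R * pi / (2 * n.+1)%:R) :> R by apply: sinp; lia.
have s3pos : 0 < sin (3%:R * pi / (2 * n.+1)%:R) :> R by apply: sinp; lia.
split.
  by move=> H; rewrite /K; case: ifP => // /negbT; move: H; lia.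
split.
  by move=> H; rewrite /K; case: ifP => // HK; move: H HK hh n2; lia.
split.
  rewrite /kbound lef_pV2 ?posrE ?mulr_gt0 //.
  rewrite ler_pM2l ?mulr_gt0 //.
  by apply: sin_ge3; lia.
rewrite !inE => Hin.
have : (K == 3)%N || (K == 2 * n - 1)%N.
  by rewrite /K; case: ifP; move: Hin hh n2; lia.
case/orP => /eqP ->; first by [].
rewrite /kbound (@sin_refl R n (2 * n - 1)); last by lia.
by rewrite (_ : (2 * n.+1 - (2 * n - 1) = 3)%N) //; lia.
Qed.
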